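(* Let $\Sigma$ be a finite set of constraints, each of which is either a data-full dtgd or a degd, and let $D$ be a distributed instance. Then there is no infinite chase sequence for $D$ with $\Sigma$.
   Context: Data values come from a linearly ordered set (e.g. $\mathbb{N}$, $\mathbb{Z}$ or $\mathbb{Q}$). A schema is a finite set of relation symbols with fixed arities; a fact is $R(a_1,\dots,a_m)$ with data values $a_i$. A distributed instance $D=(G,(I_k)_{k\in N})$ consists of a finite set $N$ of nodes, a finite global instance $G$ (a set of facts) and, for each node $k$, a finite local instance $I_k$ with $\bigcup_k I_k\subseteq G$; we write $f@k$ for $f\in I_k$ (a distributed fact). There are disjoint infinite sets of data variables and node variables. A relation atom is $R(t_1,\dots,t_m)$ with each $t_i$ a data variable or a data value; a distributed atom $A@\kappa$ consists of a relation atom $A$ and a node variable $\kappa$; a comparison atom is $t<t'$ or $t\le t'$ with $t,t'$ data variables or data values. A distribution tgd (dtgd) $\sigma$ has the form $\mathcal{A},\mathcal{C}\to\mathcal{A}'$ where $\mathcal{A},\mathcal{A}'$ are finite sets of relation and distributed atoms and $\mathcal{C}$ is a finite set of comparison atoms over variables of $\mathcal{A}$; its body is $\mathcal{A}\cup\mathcal{C}$, $\mathrm{rbody}(\sigma)=\mathcal{A}$, its head is $\mathcal{A}'$. A distribution egd (degd) has the form $\mathcal{A},\mathcal{C}\to s=s'$ where $s,s'$ are either both data variables of $\mathcal{A}$ or both node variables of $\mathcal{A}$. A valuation maps data variables to data values (and is the identity on data values) and node variables to nodes; it satisfies a relation atom $A$ on $D$ if $V(A)\in G$, a distributed atom $A@\kappa$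 if $V(A)\in I_{V(\kappa)}$, and comparison atoms in the obvious way. A dtgd is data-full if every data variable of its head occurs in its body (node variables of the head may be new, i.e. existentially quantified). A data-full dtgd may be assumed to mention at most one node variable in its head; it is node-creating if its head mentions a node variable $\kappa$ (its head variable) not occurring in its body. Chase step: a dtgd $\sigma$ is applicable to $D$ with valuation $W$ if $W$ satisfies the body of $\sigma$ on $D$, there is no valuation $W'$ agreeing with $W$ on the body variables with $W'(\mathrm{head}(\sigma))\subseteq D$ (i.e. all head atoms satisfied), and, if $\sigma$ is node-creating, $W$ maps the head variable to a node not occurring in $D$. The result is $D'=D\cup W(\mathrm{head}(\sigma))$ (global facts are added to the global instance, distributed facts $f@k$ to the local instance of $k$, creating $k$ if new). A chase sequence for $D$ with $\Sigma$ is a sequence $D_0,D_1,\dots$ with $D_0=D$ and each $D_{i+1}$ obtained from $D_i$ by a chase step with some dtgd of $\Sigma$. *)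

(* Defs.v *)
From HB Require Import structures.
From Stdlib Require Import List.
From mathcomp Require Import all_boot all_order finmap.
Set Implicit Arguments. Unset Strict Implicit. Unset Printing Implicit Defensive.
Import Order.TTheory.
Local Open Scope fset_scope.

Section Distributed.
Context {disp : Order.disp_t} (V : orderType disp).

(* relation symbols, nodes, data variables, node variables: all encoded by nat
   (data variables and node variables live in separate syntactic positions,
   hence are disjoint) *)

Definition fact := (nat * seq V)%type.

Inductive dterm := DVar of nat | DVal of V.

Record ratom := RAtom { rsym : nat; rargs : seq dterm }.

(* atom of a tgd body/head: (A, None) = relation atom A,
   (A, Some kappa) = distributed atom A@kappa *)
Definition atom := (ratom * option nat)%type.

Inductive catom := CLt of dterm & dterm | CLe of dterm & dterm.

Record dtgd := DTgd { tg_body : seq atom; tg_cmp : seq catom; tg_head : seq atom }.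

Inductive eqatom := EqData of nat & nat | EqNode of nat & nat.

Record degd := DEgd { eg_body : seq atom; eg_cmp : seq catom; eg_eq : eqatom }.

Inductive constr := CTgd of dtgd | CEgd of degd.

Record dinst := DInst { dnodes : {fset nat}; dglob : {fset fact};
                        dloc : nat -> {fset fact} }.

Definition dinst_wf (ar : nat -> nat) (D : dinst) : Prop :=
  (forall k, k \notin dnodes D -> dloc D k = fset0) /\
  (forall k, dloc D k `<=` dglob D) /\
  (forall f, f \in dglob D -> size f.2 = ar f.1).

Definition dvars_terms (s : seq dterm) : seq nat :=
  pmap (fun t => if t is DVar x then Some x else None) s.
Definition dvars_atoms (s : seq atom) : seq nat :=
  flatten (map (fun a => dvars_terms (rargs a.1)) s).
Definition nvars_atoms (s : seq atom) : seq nat := pmap snd s.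
Definition dvars_cmps (s : seq catom) : seq nat :=
  flatten (map (fun c => match c with
                         | CLt t u => dvars_terms [:: t; u]
                         | CLe t u => dvars_terms [:: t; u] end) s).

Definition atoms_wf (ar : nat -> nat) (s : seq atom) : Prop :=
  forall a, In a s -> size (rargs a.1) = ar (rsym a.1).

Definition dtgd_wf (ar : nat -> nat) (s : dtgd) : Prop :=
  atoms_wf ar (tg_body s) /\ atoms_wf ar (tg_head s) /\
  {subset dvars_cmps (tg_cmp s) <= dvars_atoms (tg_body s)}.

Definition degd_wf (ar : nat -> nat) (e : degd) : Prop :=
  atoms_wf ar (eg_body e) /\
  {subset dvars_cmps (eg_cmp e) <= dvars_atoms (eg_body e)} /\
  match eg_eq e with
  | EqData x y => x \in dvars_atoms (eg_body e) /\ y \in dvars_atoms (eg_body e)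
  | EqNode k l => k \in nvars_atoms (eg_body e) /\ l \in nvars_atoms (eg_body e)
  end.

Definition data_full (s : dtgd) : Prop :=
  {subset dvars_atoms (tg_head s) <= dvars_atoms (tg_body s)}.

Definition single_head_nvar (s : dtgd) : Prop :=
  size (undup (nvars_atoms (tg_head s))) <= 1.

Definition new_nvars (s : dtgd) : seq nat :=
  [seq k <- nvars_atoms (tg_head s) | k \notin nvars_atoms (tg_body s)].

Record valuation := Val { vdata : nat -> V; vnode : nat -> nat }.

Definition eval_term (W : valuation) (t : dterm) : V :=
  match t with DVar x => vdata W x | DVal a => a end.
Definition eval_ratom (W : valuation) (A : ratom) : fact :=
  (rsym A, map (eval_term W) (rargs A)).

Definition sat_atom (D : dinst) (W : valuation) (a : atom) : Prop :=
  match a.2 with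
  | None => eval_ratom W a.1 \in dglob D
  | Some k => eval_ratom W a.1 \in dloc D (vnode W k)
  end.
Definition sat_cmp (W : valuation) (c : catom) : Prop :=
  match c with
  | CLt t u => (eval_term W t < eval_term W u)%O
  | CLe t u => (eval_term W t <= eval_term W u)%O
  end.

Definition agree_body (s : dtgd) (W W' : valuation) : Prop :=
  (forall x, x \in dvars_atoms (tg_body s) -> vdata W x = vdata W' x) /\
  (forall k, k \in nvars_atoms (tg_body s) -> vnode W k = vnode W' k).

Definition applicable (s : dtgd) (D : dinst) (W : valuation) : Prop :=
  (forall a, In a (tg_body s) -> sat_atom D W a) /\
  (forall c, In c (tg_cmp s) -> sat_cmp W c) /\
  ~ (exists W', agree_body s W W' /\
                forall a, In a (tg_head s) -> sat_atom D W' a) /\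
  (forall k, k \in new_nvars s -> vnode W k \notin dnodes D).

(* D' = D u W(head): global facts go to G, distributed facts f@k go to I_k
   (and to G, keeping the union of local instances inside G); nodes of
   distributed head facts are created if new *)
Definition chase_result (s : dtgd) (D : dinst) (W : valuation) : dinst :=
  DInst (dnodes D `|` seq_fset tt (map (vnode W) (nvars_atoms (tg_head s))))
        (dglob D `|` seq_fset tt (map (fun a => eval_ratom W a.1) (tg_head s)))
        (fun k => dloc D k `|`
           seq_fset tt [seq eval_ratom W a.1 | a <- tg_head s &
                         if a.2 is Some kap then vnode W kap == k else false]).

Definition chase_step (Sigma : seq constr) (D D' : dinst) : Prop :=
  exists s, In (CTgd s) Sigma /\
  exists W, applicable s D W /\ D' = chase_result s D W.

Definition infinite_chase (Sigma : seq constr) (D : dinst) : Prop :=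
  exists Ds : nat -> dinst, Ds 0 = D /\ forall i, chase_step Sigma (Ds i) (Ds i.+1).

Definition constr_ok (ar : nat -> nat) (c : constr) : Prop :=
  match c with
  | CTgd s => dtgd_wf ar s /\ data_full s /\ single_head_nvar s
  | CEgd e => degd_wf ar e
  end.

End Distributed.

(* Main.v *)
Require Import Defs.
From Stdlib Require Import List.
From mathcomp Require Import all_boot all_order finmap.
From Stdlib Require Import Classical.
Set Implicit Arguments. Unset Strict Implicit. Unset Printing Implicit Defensive.
Local Open Scope fset_scope.

Lemma In_mem (T : eqType) (x : T) s : In x s -> x \in s.
Proof. elim: s => //= y s IH [->|/IH H]; rewrite inE ?eqxx ?H ?orbT //. Qed.

Lemma In_map (A : Type) (B : eqType) (f : A -> B) a l : In a l -> f a \in map f l.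
Proof. elim: l => //= b l IH [->|/IH H]; rewrite inE ?eqxx ?H ?orbT //. Qed.

Lemma In_mapfilter (A : Type) (B : eqType) (f : A -> B) (P : pred A) a l :
  In a l -> P a -> f a \in map f (filter P l).
Proof.
elim: l => //= b l IH [<- Pa|H Pa]; first by rewrite Pa /= inE eqxx.
case: (P b) => /=; rewrite ?inE IH ?orbT //.
Qed.

Lemma mapfilter_In (A : Type) (B : eqType) (f : A -> B) (P : pred A) y l :
  y \in map f (filter P l) -> exists a, In a l /\ P a /\ y = f a.
Proof.
elim: l => //= b l IH.
case Pb: (P b) => /=.
- rewrite inE => /orP[/eqP->|/IH[a [h1 [h2 h3]]]].
  + by exists b; split; [left|].
  + by exists a; split; [right|].
- move/IH => [a [h1 [h2 h3]]]; by exists a; split; [right|].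
Qed.

Lemma map_In (A : Type) (B : eqType) (f : A -> B) y l :
  y \in map f l -> exists a, In a l /\ y = f a.
Proof.
elim: l => //= b l IH; rewrite inE => /orP[/eqP->|/IH[a [h1 h2]]].
- by exists b; split; [left|].
- by exists a; split; [right|].
Qed.

Lemma In_flatten (A : Type) (B : eqType) (g : A -> seq B) a l x :
  In a l -> x \in g a -> x \in flatten (map g l).
Proof. elim: l => //= b l IH [<- H|H1 H2]; rewrite mem_cat ?H ?(IH H1 H2) ?orbT //. Qed.

Lemma flatten_In (A : Type) (B : eqType) (g : A -> seq B) l x :
  x \in flatten (map g l) -> exists a, In a l /\ x \in g a.
Proof.
elim: l => //= b l IH; rewrite mem_cat => /orP[H|/IH [a [h1 h2]]].
- by exists b; split; [left|].
- by exists a; split; [right|].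
Qed.

Lemma In_flatten_In (A B : Type) (g : A -> seq B) a l x :
  In a l -> In x (g a) -> In x (flatten (map g l)).
Proof. elim: l => //= b l IH [<- H|H1 H2]; apply/in_app_iff; [by left|right; exact: IH]. Qed.

Lemma all_In (T : Type) (P : pred T) l : (forall x, In x l -> P x) -> all P l.
Proof.
elim: l => //= x l IH H; apply/andP; split; first by apply: H; left.
by apply: IH => y hy; apply: H; right.
Qed.

Lemma count_strict (T : Type) (p q : pred T) s x :
  (forall y, p y -> q y) -> In x s -> ~~ p x -> q x -> count p s < count q s.
Proof.
move=> Hpq; elim: s => //= y s IH [<-|Hx] npx qx.
- by rewrite (negbTE npx) qx /= add0n add1n ltnS; apply: sub_count.
- have Hle : (p y <= q y)%N by case E: (p y) => //; rewrite (Hpq y E).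
  by rewrite -addnS; apply: leq_add => //; apply: IH.
Qed.

Lemma count_mono (T : Type) (p q : pred T) s :
  (forall y, p y -> q y) -> count p s <= count q s.
Proof. by move=> H; apply: sub_count. Qed.

Fixpoint seqs (T : Type) (X : seq T) n : seq (seq T) :=
  if n is m.+1 then [seq x :: l | x <- X, l <- seqs X m] else [:: [::]].

Lemma seqs_mem (T : eqType) (X : seq T) l : all (mem X) l -> l \in seqs X (size l).
Proof.
elim: l => [|x l IH] /=; first by rewrite inE.
move/andP => [hx hl]; exact: (allpairs_f (fun x l => x :: l) hx (IH hl)).
Qed.

Lemma seqs_all (T : eqType) (X : seq T) n l : l \in seqs X n -> all (mem X) l.
Proof.
elim: n l => [|n IH] l /=; first by rewrite inE => /eqP->.
case/allpairsP => [[x l'] /= [hx hl ->]] /=; rewrite hx IH //.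
Qed.

Lemma card_lt (K : choiceType) (A B : {fset K}) x :
  A `<=` B -> x \in B -> x \notin A -> #|` A| < #|` B|.
Proof.
move=> sAB xB xA; apply: fproper_ltn_card; rewrite fproperE sAB /=.
by apply/negP => /fsubsetP /(_ x xB); apply/negP.
Qed.

Lemma sum_strict (I : eqType) (r : seq I) (F G : I -> nat) j :
  uniq r -> j \in r -> (forall i, i \in r -> F i <= G i) -> F j < G j ->
  \sum_(i <- r) F i < \sum_(i <- r) G i.
Proof.
move=> ur jr H Hj; rewrite (bigD1_seq j) // [X in _ < X](bigD1_seq j) //=.
rewrite -addSn; apply: leq_add => //.
rewrite big_seq_cond [X in _ <= X]big_seq_cond; apply: leq_sum => i /andP [ir _]; exact: H.
Qed.

Lemma mem_In (T : eqType) (x : T) s : x \in s -> In x s.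
Proof. elim: s => //= y s IH; rewrite inE => /orP[/eqP->|/IH H]; [by left|by right]. Qed.

Section Main.
Context {disp : Order.disp_t} (V : orderType disp).

Definition heads_of (c : constr V) : seq (atom V) :=
  if c is CTgd s then tg_head s else [::].
Definition consts (ts : seq (dterm V)) : seq V :=
  pmap (fun t => if t is DVal v then Some v else None) ts.

Lemma dvars_terms_In x (ts : seq (dterm V)) : x \in dvars_terms ts <-> In (DVar V x) ts.
Proof.
elim: ts => [|t ts IH] /=; first by split.
case: t => [y|v] /=.
- rewrite inE; split.
  + by case/orP => [/eqP->|/IH H]; [left|right].
  + by case => [[->]|/IH ->]; rewrite ?eqxx ?orbT.
- rewrite IH; split; [by right | by case].
Qed.

Lemma consts_In v (ts : seq (dterm V)) : In (DVal v) ts -> v \in consts ts.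
Proof.
elim: ts => [|t ts IH] //= [->|H]; first by rewrite /= inE eqxx.
by case: t => [y|w] /=; rewrite ?inE IH ?orbT.
Qed.

Lemma dvars_atoms_In x (s : seq (atom V)) :
  x \in dvars_atoms s <-> exists a, In a s /\ In (DVar V x) (rargs a.1).
Proof.
elim: s => [|a s IH] /=.
- by split => //; case=> ? [].
- rewrite /dvars_atoms /= mem_cat; split.
  + case/orP => [/dvars_terms_In H|/IH [b [h1 h2]]].
    * by exists a; split; [left|].
    * by exists b; split; [right|].
  + case=> b [[<-|h1] h2].
    * by apply/orP; left; apply/dvars_terms_In.
    * apply/orP; right; apply/IH; by exists b.
Qed.

Lemma nvars_In k (s : seq (atom V)) :
  k \in nvars_atoms s <-> exists A, In (A, Some k) s.
Proof.
elim: s => [|[A o] s IH] /=.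
- by split => //; case=> ? [].
- rewrite /nvars_atoms /=; case: o => [k'|] /=.
  + rewrite inE; split.
    * case/orP => [/eqP->|/IH [B h]]; first by exists A; left.
      by exists B; right.
    * case=> B [[_ ->]|h]; first by rewrite eqxx.
      by apply/orP; right; apply/IH; exists B.
  + rewrite IH; split; case=> B h; exists B; [by right| by case: h].
Qed.

Lemma single_nv (s : dtgd V) k k' : single_head_nvar s ->
  k \in nvars_atoms (tg_head s) -> k' \in nvars_atoms (tg_head s) -> k = k'.
Proof.
rewrite /single_head_nvar -(mem_undup (nvars_atoms _)) -[k' \in _](mem_undup (nvars_atoms _)).
by case: (undup _) => [|z [|? ?]] //= _; rewrite !inE => /eqP-> /eqP->.
Qed.


Context (Sigma : seq (constr V)) (D0 : dinst V).

Definition allheads := flatten (map heads_of Sigma).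
Definition Dom : seq V :=
  flatten (map (fun f : fact V => f.2) (enum_fset (dglob D0))) ++
  flatten (map (fun a : atom V => consts (rargs a.1)) allheads).
Definition Ufin : seq (fact V) :=
  enum_fset (dglob D0) ++
  flatten (map (fun a : atom V => map (fun l => (rsym a.1, l)) (seqs Dom (size (rargs a.1)))) allheads).
Definition UB : seq (fact V * bool) := [seq (f, b) | f <- Ufin, b <- [:: true; false]].
Definition Cand := flatten (map (fun c => seqs UB (size (heads_of c))) Sigma).
Definition keyOf (s : dtgd V) (W : valuation V) : seq (fact V * bool) :=
  [seq (eval_ratom W a.1, a.2 != None) | a <- tg_head s].
Definition good (D : dinst V) (k : seq (fact V * bool)) : bool :=
  all (fun p => p.2 || (p.1 \in dglob D)) k &&
  has (fun n => all (fun p => ~~ p.2 || (p.1 \in dloc D n)) k) (enum_fset (dnodes D)).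
Definition locsum (D : dinst V) := \sum_(n <- dnodes D) #|` dloc D n|.
Definition mu (D : dinst V) := (#|` dglob D| + locsum D + count (good D) Cand)%N.
Definition Inv (D : dinst V) :=
  (forall k f, f \in dloc D k -> k \in dnodes D) /\
  (forall k, dloc D k `<=` dglob D) /\
  (forall f, f \in dglob D -> f \in Ufin) /\
  (#|` dnodes D| <= #|` dnodes D0| + count (good D) Cand)%N.

Lemma allheads_In s a : In (CTgd s) Sigma -> In a (tg_head s) -> In a allheads.
Proof. move=> h1 h2; exact: (In_flatten_In (g := heads_of) h1 h2). Qed.

Lemma Ufin_vals f : f \in Ufin -> all (mem Dom) f.2.
Proof.
rewrite /Ufin mem_cat => /orP [hf|].
- apply/allP => v hv /=; rewrite /Dom mem_cat; apply/orP; left.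
  apply/flatten_mapP; by exists f.
- move/flatten_In => [a [_ /mapP [l hl ->]]] /=; exact: seqs_all hl.
Qed.

Lemma Ufin_head s a (W : valuation V) :
  In (CTgd s) Sigma -> In a (tg_head s) ->
  (forall t, In t (rargs a.1) -> eval_term W t \in Dom) ->
  eval_ratom W a.1 \in Ufin.
Proof.
move=> hs ha ht; rewrite /Ufin mem_cat; apply/orP; right.
apply: (In_flatten (allheads_In hs ha)) => /=.
rewrite /eval_ratom; apply: map_f.
rewrite -(size_map (eval_term W)); apply: seqs_mem.
rewrite all_map; apply: all_In => t hin /=; exact: ht.
Qed.

Lemma Dom_const s a v : In (CTgd s) Sigma -> In a (tg_head s) ->
  In (DVal v) (rargs a.1) -> v \in Dom.
Proof.
move=> hs ha hv; rewrite /Dom mem_cat; apply/orP; right.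
apply: (In_flatten (allheads_In hs ha)); exact: consts_In.
Qed.


Lemma cr_glob (s : dtgd V) D (W : valuation V) : dglob (chase_result s D W) =
  dglob D `|` seq_fset tt (map (fun a => eval_ratom W a.1) (tg_head s)).
Proof. by []. Qed.
Lemma cr_loc (s : dtgd V) D (W : valuation V) k : dloc (chase_result s D W) k =
  dloc D k `|` seq_fset tt [seq eval_ratom W a.1 | a <- tg_head s &
                         if a.2 is Some kap then vnode W kap == k else false].
Proof. by []. Qed.
Lemma cr_nodes (s : dtgd V) D (W : valuation V) : dnodes (chase_result s D W) =
  dnodes D `|` seq_fset tt (map (vnode W) (nvars_atoms (tg_head s))).
Proof. by []. Qed.

Lemma sat_some D (W : valuation V) A k :
  sat_atom D W (A, Some k) = (eval_ratom W A \in dloc D (vnode W k)).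
Proof. by []. Qed.
Lemma sat_none D (W : valuation V) A :
  sat_atom D W (A, None) = (eval_ratom W A \in dglob D).
Proof. by []. Qed.

Lemma step_core (s : dtgd V) (W : valuation V) (D : dinst V) :
  In (CTgd s) Sigma -> data_full s -> single_head_nvar s ->
  applicable s D W -> Inv D ->
  Inv (chase_result s D W) /\ (mu D < mu (chase_result s D W))%N.
Proof.
move=> hs hdf hsn [hbody [hcmp [hnot hnew]]] [I1 [I2 [I3 I4]]].
have sat_glob : forall a, In a (tg_body s) -> eval_ratom W a.1 \in dglob D.
  move=> [A o] ha; have := hbody _ ha; rewrite /sat_atom /=; case: o {ha} => [k|] // h.
  exact: (fsubsetP (I2 _)) h.
have hU : forall a, In a (tg_head s) -> eval_ratom W a.1 \in Ufin.
  move=> a ha; apply: (Ufin_head hs ha) => -[x|v] ht /=.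
  - have : x \in dvars_atoms (tg_body s) by apply: (hdf); apply/dvars_atoms_In; exists a; split.
    case/dvars_atoms_In => b [hb hxb].
    have /allP := Ufin_vals (I3 _ (sat_glob b hb)); apply.
    rewrite /eval_ratom /=; exact: (In_map (eval_term W) hxb).
  - exact: Dom_const hs ha ht.
have mG : dglob D `<=` dglob (chase_result s D W) := fsubsetUl _ _.
have mL : forall k, dloc D k `<=` dloc (chase_result s D W) k := fun k => fsubsetUl _ _.
have mN : dnodes D `<=` dnodes (chase_result s D W) := fsubsetUl _ _.
have inG' : forall f, f \in dglob (chase_result s D W) -> f \in dglob D \/
    exists a, In a (tg_head s) /\ f = eval_ratom W a.1.
  move=> f; rewrite ?cr_glob ?cr_loc ?cr_nodes in_fsetU seq_fsetE.
  case/orP => [h|/map_In [a [h1 h2]]]; [by left|right; by exists a].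
have inL' : forall k f, f \in dloc (chase_result s D W) k -> f \in dloc D k \/
    exists a kap, In a (tg_head s) /\ a.2 = Some kap /\ vnode W kap = k /\ f = eval_ratom W a.1.
  move=> k f; rewrite ?cr_glob ?cr_loc ?cr_nodes in_fsetU seq_fsetE.
  case/orP => [h|/mapfilter_In [a [h1 [h2 h3]]]]; [by left|right].
  move: h2; case E: (a.2) => [kap|] //= /eqP h2; by exists a, kap.
have inN' : forall n, n \in dnodes (chase_result s D W) -> n \in dnodes D \/
    exists k, k \in nvars_atoms (tg_head s) /\ n = vnode W k.
  move=> n; rewrite ?cr_glob ?cr_loc ?cr_nodes in_fsetU seq_fsetE.
  case/orP => [h|/mapP [k hk ->]]; [by left|right; by exists k].
have headN : forall a k, In a (tg_head s) -> a.2 = Some k -> k \in nvars_atoms (tg_head s).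
  move=> [A o] k ha /= Ho; subst o; apply/nvars_In; by exists A.
have sat' : forall a, In a (tg_head s) -> sat_atom (chase_result s D W) W a.
  move=> [A [k|]] ha; rewrite ?sat_some ?sat_none.
  - rewrite ?cr_glob ?cr_loc ?cr_nodes in_fsetU seq_fsetE; apply/orP; right.
    exact: (In_mapfilter (fun a : atom V => eval_ratom W a.1)
      (P := fun a : atom V => if a.2 is Some kap then vnode W kap == vnode W k else false) ha (eqxx _)).
  - rewrite ?cr_glob ?cr_loc ?cr_nodes in_fsetU seq_fsetE; apply/orP; right.
    exact: (In_map (fun a => eval_ratom W a.1) ha).
have [a0 [ha0 nsat0]] : exists a, In a (tg_head s) /\ ~ sat_atom D W a.
  apply: NNPP => H; apply: hnot; exists W; split; first by split.
  move=> a ha; apply: NNPP => ns; apply: H; by exists a.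
have gmono : forall key, good D key -> good (chase_result s D W) key.
  move=> key /andP [h1 /hasP [n hn h2]]; apply/andP; split.
  - apply: sub_all h1 => p /orP [->|h] //; by rewrite (fsubsetP mG _ h) orbT.
  - apply/hasP; exists n; first exact: (fsubsetP mN).
    apply: sub_all h2 => p /orP [->|h] //; by rewrite (fsubsetP (mL n) _ h) orbT.
have Hcnt : (count (good D) Cand <= count (good (chase_result s D W)) Cand)%N by apply: count_mono.
have Hloc : locsum D = \sum_(n <- dnodes (chase_result s D W)) #|` dloc D n|.
  apply: big_fset_incl => // x _ nx; apply/eqP; rewrite cardfs_eq0; apply/eqP/fsetP => f.
  rewrite in_fset0; apply/negbTE/negP => /I1 h; by rewrite h in nx.
have HlocL : forall n, n \in enum_fset (dnodes (chase_result s D W)) -> (#|` dloc D n| <= #|` dloc (chase_result s D W) n|)%N.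
  move=> n _; exact: fsubset_leq_card.
have HlocLe : (locsum D <= locsum (chase_result s D W))%N.
  rewrite Hloc /locsum big_seq_cond [X in (_ <= X)%N]big_seq_cond.
  apply: leq_sum => i /andP [hi _]; exact: HlocL.
have HG : (#|` dglob D| <= #|` dglob (chase_result s D W)|)%N by apply: fsubset_leq_card.
have Hmu : (mu D < mu (chase_result s D W))%N.
  move: ha0 nsat0; case: a0 => [A [k|]] ha0; rewrite /sat_atom /= => nsat0.
  - have hl : (locsum D < locsum (chase_result s D W))%N.
      rewrite Hloc; apply: (sum_strict (j := vnode W k)); first exact: fset_uniq.
      + rewrite ?cr_glob ?cr_loc ?cr_nodes in_fsetU seq_fsetE map_f ?orbT //; exact: (headN _ _ ha0 erefl).
      + exact: HlocL.
      + apply: (card_lt (x := eval_ratom W A) (mL _)); first by have := sat' _ ha0; rewrite /sat_atom.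
        by apply/negP.
    rewrite /mu -addSn; apply: leq_add => //; rewrite -addnS; exact: leq_add.
  - have hg : (#|` dglob D| < #|` dglob (chase_result s D W)|)%N.
      apply: (card_lt (x := eval_ratom W A) mG); first by have := sat' _ ha0; rewrite /sat_atom.
      by apply/negP.
    rewrite /mu -!addnA -addSn; apply: leq_add => //; exact: leq_add.
have I1' : forall k f, f \in dloc (chase_result s D W) k -> k \in dnodes (chase_result s D W).
  move=> k f /inL' [h|[a [kap [ha [Ha [<- _]]]]]]; first exact: (fsubsetP mN _ (I1 _ _ h)).
  rewrite ?cr_glob ?cr_loc ?cr_nodes in_fsetU seq_fsetE map_f ?orbT //; exact: (headN _ _ ha Ha).
have I2' : forall k, dloc (chase_result s D W) k `<=` dglob (chase_result s D W).
  move=> k; apply/fsubsetP => f /inL' [h|[a [kap [ha [_ [_ ->]]]]]].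
  - exact: (fsubsetP mG _ (fsubsetP (I2 k) _ h)).
  - rewrite ?cr_glob ?cr_loc ?cr_nodes in_fsetU seq_fsetE; apply/orP; right.
    exact: (In_map (fun a => eval_ratom W a.1) ha).
have I3' : forall f, f \in dglob (chase_result s D W) -> f \in Ufin.
  move=> f /inG' [h|[a [ha ->]]]; [exact: I3 | exact: hU].
split => //; split => //; split => //; split => //.
case Enew: (new_nvars s) => [|kap rest].
- have hb : forall k, k \in nvars_atoms (tg_head s) -> k \in nvars_atoms (tg_body s).
    move=> k hk; apply/negPn/negP => nk.
    have : k \in new_nvars s by rewrite /new_nvars mem_filter nk hk.
    by rewrite Enew.
  have NN : dnodes (chase_result s D W) `<=` dnodes D.
    apply/fsubsetP => n /inN' [//|[k [hk ->]]].
    have /nvars_In [A hA] := hb k hk.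
    have := hbody _ hA; rewrite /sat_atom /= => h; exact: I1 h.
  apply: leq_trans (fsubset_leq_card NN) _; apply: leq_trans I4 _.
  by rewrite leq_add2l.
- have hk : kap \in new_nvars s by rewrite Enew inE eqxx.
  have nodeNew := hnew kap hk.
  move: hk; rewrite /new_nvars mem_filter => /andP [nb hh].
  have NN : dnodes (chase_result s D W) `<=` vnode W kap |` dnodes D.
    apply/fsubsetP => n /inN' [h|[k [hk ->]]]; rewrite !inE ?h ?orbT //.
    by rewrite (single_nv hsn hk hh) eqxx.
  set key := keyOf s W.
  have kC : key \in Cand.
    apply: (In_flatten (g := fun c => seqs UB (size (heads_of c))) hs) => /=.
    rewrite /key /keyOf -(size_map (fun a => (eval_ratom W a.1, a.2 != None)) (tg_head s)).
    apply: seqs_mem; rewrite all_map; apply: all_In => a ha /=.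
    rewrite /UB; apply: (allpairs_f (fun f b => (f, b))); first exact: hU.
    by rewrite !inE; case: (_ != _).
  have ngood : ~~ good D key.
    apply/negP => /andP [h1 /hasP [n hn h2]]; apply: hnot.
    exists (Val (vdata W) (fun k => if k == kap then n else vnode W k)); split.
    + split => // k hk /=.
      have : k != kap by apply: contraNneq nb => <-.
      by move/negbTE ->.
    + move=> [A o] ha; rewrite /sat_atom /=; case: o ha => [k|] ha.
      * have hk := headN (A, Some k) k ha erefl.
        rewrite (single_nv hsn hk hh) eqxx.
        have := allP h2 _ (In_map (fun a => (eval_ratom W a.1, a.2 != None)) ha).
        by [].
      * have := allP h1 _ (In_map (fun a => (eval_ratom W a.1, a.2 != None)) ha).
        by [].
  have pgood : good (chase_result s D W) key.
    apply/andP; split.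
    - rewrite /key /keyOf all_map; apply: all_In => -[A o] ha /=; case: o ha => [k|] ha //=.
      by have := sat' _ ha; rewrite sat_none.
    - apply/hasP; exists (vnode W kap).
      + by rewrite ?cr_glob ?cr_loc ?cr_nodes in_fsetU seq_fsetE map_f ?orbT.
      + rewrite /key /keyOf all_map; apply: all_In => -[A o] ha /=; case: o ha => [k|] ha //=.
        have hk := headN (A, Some k) k ha erefl.
        have := sat' _ ha; rewrite sat_some (single_nv hsn hk hh) => ->.
        by [].
  have Hc : (count (good D) Cand < count (good (chase_result s D W)) Cand)%N.
    exact: (count_strict gmono (mem_In kC) ngood pgood).
  apply: leq_trans (fsubset_leq_card NN) _.
  rewrite cardfsU1 nodeNew add1n; apply: leq_ltn_trans I4 _.
  by rewrite ltn_add2l.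
Qed.


Lemma Inv0 (ar : nat -> nat) : dinst_wf ar D0 -> Inv D0.
Proof.
move=> [W1 [W2 _]]; split; [|split; [exact: W2|split]].
- move=> k f hf; apply/negPn/negP => nk; by rewrite (W1 k nk) in_fset0 in hf.
- move=> f hf; rewrite /Ufin mem_cat; apply/orP; by left.
- exact: leq_addr.
Qed.

Lemma mu_bound D : Inv D ->
  (mu D <= size Ufin + (#|` dnodes D0| + size Cand) * size Ufin + size Cand)%N.
Proof.
move=> [I1 [I2 [I3 I4]]]; rewrite /mu.
have hG : (#|` dglob D| <= size Ufin)%N.
  apply: uniq_leq_size; [exact: fset_uniq | move=> f hf; exact: I3].
have hL : (locsum D <= #|` dnodes D| * size Ufin)%N.
  have : (locsum D <= \sum_(n <- dnodes D) size Ufin)%N.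
    apply: leq_sum => n _; apply: uniq_leq_size; first exact: fset_uniq.
    move=> f hf; apply: I3; exact: (fsubsetP (I2 n)).
  by rewrite big_const_seq count_predT iter_addn_0 mulnC.
have hC : (count (good D) Cand <= size Cand)%N by apply: count_size.
have hN : (#|` dnodes D| <= #|` dnodes D0| + size Cand)%N.
  apply: leq_trans I4 _; by rewrite leq_add2l.
apply: leq_add => //; apply: leq_add => //.
apply: leq_trans hL _; by rewrite leq_mul2r hN orbT.
Qed.

End Main.

Theorem proposition4p6 (disp : Order.disp_t) (V : orderType disp)
  (ar : nat -> nat) (Sigma : seq (constr V)) (D : dinst V) :
  (forall c, In c Sigma -> constr_ok ar c) ->
  dinst_wf ar D ->
  ~ infinite_chase Sigma D.
Proof.
move=> HS HD [Ds [H0 Hstep]].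
have H : forall i, Inv Sigma D (Ds i) /\ (i <= mu Sigma D (Ds i))%N.
  elim=> [|i [hI hle]].
  - rewrite H0; split; [exact: Inv0 HD | by []].
  - case: (Hstep i) => s [hs [W [happ ->]]].
    have [_ [hdf hsn]] := HS _ hs.
    have [hI' hlt] := step_core hs hdf hsn happ hI.
    split => //; exact: leq_ltn_trans hle hlt.
have [hI hle] := H (size (Ufin Sigma D) + (#|` dnodes D| + size (Cand Sigma D)) * size (Ufin Sigma D) + size (Cand Sigma D)).+1.
have := leq_trans hle (mu_bound hI).
by rewrite ltnn.
Qed.
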